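(* Let $\mathcal{A}$ be a triangular algebra over a field $F$ with $\operatorname{char}(F)\neq2$. Then $\operatorname{JCent}(\mathcal{A})=\operatorname{Cent}(\mathcal{A})$.
   Context: A triangular algebra is an algebra of the form $\mathcal{A}=\begin{pmatrix}B & M\\ 0 & C\end{pmatrix}$ (with formal matrix operations), where $B,C$ are unital algebras and $M$ is a $(B,C)$-bimodule that is faithful as a left $B$-module and as a right $C$-module. $x\circ y=xy+yx$. $\operatorname{JCent}(\mathcal{A})$: linear $f:\mathcal{A}\to\mathcal{A}$ with $f(x\circ y)=f(x)\circ y$ for all $x,y$. $\operatorname{Cent}(\mathcal{A})$: linear $f$ with $f(xy)=f(x)y=xf(y)$ for all $x,y$. *)

(* Defs.v *)
From HB Require Import structures.
From mathcomp Require Import all_boot all_order all_algebra.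
Set Implicit Arguments. Unset Strict Implicit. Unset Printing Implicit Defensive.
Import GRing.Theory.
Local Open Scope ring_scope.

Record bimodule (F : fieldType) (B C : algType F) (M : lmodType F)
    (lb : B -> M -> M) (rc : M -> C -> M) : Prop := Bimodule {
  lb_addl : forall b1 b2 m, lb (b1 + b2) m = lb b1 m + lb b2 m;
  lb_addr : forall b m1 m2, lb b (m1 + m2) = lb b m1 + lb b m2;
  lb_mul  : forall b1 b2 m, lb (b1 * b2) m = lb b1 (lb b2 m);
  lb_one  : forall m, lb 1 m = m;
  lb_scalel : forall (k : F) b m, lb (k *: b) m = k *: lb b m;
  lb_scaler : forall (k : F) b m, lb b (k *: m) = k *: lb b m;
  rc_addl : forall m1 m2 c, rc (m1 + m2) c = rc m1 c + rc m2 c;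
  rc_addr : forall m c1 c2, rc m (c1 + c2) = rc m c1 + rc m c2;
  rc_mul  : forall m c1 c2, rc m (c1 * c2) = rc (rc m c1) c2;
  rc_one  : forall m, rc m 1 = m;
  rc_scalel : forall (k : F) m c, rc (k *: m) c = k *: rc m c;
  rc_scaler : forall (k : F) m c, rc m (k *: c) = k *: rc m c;
  lb_rc : forall b m c, rc (lb b m) c = lb b (rc m c)
}.

Definition lfaithful (B M : Type) (zB : B) (zM : M) (lb : B -> M -> M) :=
  forall b, (forall m, lb b m = zM) -> b = zB.
Definition rfaithful (C M : Type) (zC : C) (zM : M) (rc : M -> C -> M) :=
  forall c, (forall m, rc m c = zM) -> c = zC.

Section Triangular.
Variables (F : fieldType) (B C : algType F) (M : lmodType F)
  (lb : B -> M -> M) (rc : M -> C -> M).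

(* Elements of the triangular algebra [[B, M], [0, C]]. *)
Record tri := Tri { tB : B; tM : M; tC : C }.

Definition tri_add (x y : tri) : tri :=
  Tri (tB x + tB y) (tM x + tM y) (tC x + tC y).
Definition tri_scale (k : F) (x : tri) : tri :=
  Tri (k *: tB x) (k *: tM x) (k *: tC x).
(* formal matrix product *)
Definition tri_mul (x y : tri) : tri :=
  Tri (tB x * tB y) (lb (tB x) (tM y) + rc (tM x) (tC y)) (tC x * tC y).
Definition tri_jmul (x y : tri) : tri := tri_add (tri_mul x y) (tri_mul y x).

Definition tri_linear (f : tri -> tri) : Prop :=
  (forall x y, f (tri_add x y) = tri_add (f x) (f y)) /\
  (forall (k : F) x, f (tri_scale k x) = tri_scale k (f x)).

Definition JCent (f : tri -> tri) : Prop :=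
  tri_linear f /\ forall x y, f (tri_jmul x y) = tri_jmul (f x) y.

Definition Cent (f : tri -> tri) : Prop :=
  tri_linear f /\
  forall x y, f (tri_mul x y) = tri_mul (f x) y /\
              f (tri_mul x y) = tri_mul x (f y).

End Triangular.

(* Main.v *)
Require Import Defs.
From mathcomp Require Import all_boot all_order all_algebra.
Set Implicit Arguments. Unset Strict Implicit. Unset Printing Implicit Defensive.
Import GRing.Theory.
Local Open Scope ring_scope.

Section Proof.
Variables (F : fieldType) (B C : algType F) (M : lmodType F)
    (lb : B -> M -> M) (rc : M -> C -> M)
    (Hbim : bimodule lb rc)
    (HfB : lfaithful 0 0 lb) (HfC : rfaithful 0 0 rc)
    (Hchar : (2%:R : F) != 0).

Lemma tri_ext (x y : tri B C M) :
  tB x = tB y -> tM x = tM y -> tC x = tC y -> x = y.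
Proof. by case: x => ???; case: y => ??? /= -> -> ->. Qed.

Lemma dbl_inj (V : lmodType F) (v w : V) : v + v = w + w -> v = w.
Proof.
move=> H.
have E : forall u : V, u + u = 2%:R *: u.
  by move=> u; rewrite scalerDl scale1r.
move: H; rewrite !E => /(congr1 (fun t => (2%:R)^-1 *: t)).
by rewrite !scalerA mulVf // !scale1r.
Qed.

Lemma lb0l m : lb 0 m = 0.
Proof.
apply: (@addrI _ (lb 0 m)); by rewrite -(lb_addl Hbim) !addr0.
Qed.
Lemma lb0r b : lb b 0 = 0.
Proof.
apply: (@addrI _ (lb b 0)); by rewrite -(lb_addr Hbim) !addr0.
Qed.
Lemma rc0l c : rc 0 c = 0.
Proof.
apply: (@addrI _ (rc 0 c)); by rewrite -(rc_addl Hbim) !addr0.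
Qed.
Lemma rc0r m : rc m 0 = 0.
Proof.
apply: (@addrI _ (rc m 0)); by rewrite -(rc_addr Hbim) !addr0.
Qed.

Lemma lbN b m : lb (- b) m = - lb b m.
Proof. by apply/eqP; rewrite -addr_eq0 -(lb_addl Hbim) addNr lb0l. Qed.
Lemma rcN m c : rc m (- c) = - rc m c.
Proof. by apply/eqP; rewrite -addr_eq0 -(rc_addr Hbim) addNr rc0r. Qed.

Local Notation mul := (tri_mul lb rc).
Local Notation jm := (tri_jmul lb rc).
Local Notation add := (@tri_add F B C M).

Lemma add4 (V : zmodType) (a b c d : V) :
  a + a + (b + b) + (c + c) + (d + d) = a + b + c + d + (a + b + c + d).
Proof. by rewrite -(addrACA a) -(addrACA (a+b)) -(addrACA (a+b+c)). Qed.

Lemma jm_dbl u y : jm (add u u) y = add (jm u y) (jm u y).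
Proof.
apply: tri_ext; rewrite /= ?mulrDl ?mulrDr
  ?(lb_addl Hbim) ?(lb_addr Hbim) ?(rc_addl Hbim) ?(rc_addr Hbim).
- by rewrite addrACA.
- by rewrite [RHS]addrACA; congr (_ + _); rewrite addrACA.
- by rewrite addrACA.
Qed.


Ltac simp1 := rewrite /= ?(lb_addl Hbim) ?(lb_addr Hbim) ?(rc_addl Hbim) ?(rc_addr Hbim)
  ?mul1r ?mulr1 ?mul0r ?mulr0 ?(lb_one Hbim) ?(rc_one Hbim) ?lb0r ?rc0l ?lb0l ?rc0r
  ?addr0 ?add0r.
Ltac simp := simp1; simp1.

Lemma tri_dbl_inj (x y : tri B C M) : add x x = add y y -> x = y.
Proof.
move=> H; apply: tri_ext; apply: dbl_inj;
  [exact: (congr1 (@tB _ _ _ _) H) | exact: (congr1 (@tM _ _ _ _) H)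
  | exact: (congr1 (@tC _ _ _ _) H)].
Qed.

Lemma jcent_cent (f : tri B C M -> tri B C M) :
  JCent lb rc f -> Cent lb rc f.
Proof.
case=> [[Hadd Hsc] Hj].
pose I := Tri (1 : B) (0 : M) (1 : C).
have jI : forall y, jm I y = add y y.
  by move=> [yb ym yc]; apply: tri_ext; simp.
have D : forall y, add (f y) (f y) = jm (f I) y.
  by move=> y; rewrite -Hadd -jI Hj.
have K : forall x y, jm (f I) (jm x y) = jm (jm (f I) x) y.
  by move=> x y; rewrite -D Hj -jm_dbl D.
move: D K; case: (f I) => a m c D K.
pose e := Tri (1 : B) (0 : M) (0 : C).
have m0 : m = 0.
  have := congr1 (@tM _ _ _ _) (K e e); simp.
  by move=> H; apply: (@addrI _ m); rewrite H addr0.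
subst m.
have L : forall n, rc n c = lb a n.
  move=> n; have := congr1 (@tM _ _ _ _) (K e (Tri 0 n 0)); simp.
  by move/addrI.
have Ca : forall b, a * b = b * a.
  move=> b; apply/eqP; rewrite -subr_eq0; apply/eqP; apply: HfB => n.
  by rewrite (lb_addl Hbim) lbN !(lb_mul Hbim) -!L (lb_rc Hbim) subrr.
have Cc : forall d, c * d = d * c.
  move=> d; apply/eqP; rewrite -subr_eq0; apply/eqP; apply: HfC => n.
  by rewrite (rc_addr Hbim) rcN !(rc_mul Hbim) !L (lb_rc Hbim) subrr.
pose z := Tri a (0 : M) c.
have fE : forall y, f y = mul z y.
  move=> y; apply: tri_dbl_inj; rewrite D.
  case: y => yb ym yc; apply: tri_ext; simp; rewrite ?Ca ?Cc ?L //.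
split; first by [].
move=> x y; rewrite !fE.
case: x => xb xm xc; case: y => yb ym yc.
split; apply: tri_ext; simp; rewrite ?(lb_mul Hbim) ?(rc_mul Hbim) ?mulrA //.
- by rewrite (lb_rc Hbim).
- by rewrite Ca.
- by rewrite -[lb a ym]L -(lb_rc Hbim xb ym c) L [rc xm c]L (lb_rc Hbim).
- by rewrite Cc.
Qed.

Lemma cent_jcent (f : tri B C M -> tri B C M) :
  Cent lb rc f -> JCent lb rc f.
Proof.
case=> Hl Hm; split=> // x y.
rewrite /tri_jmul Hl.1 (Hm x y).1 (Hm y x).2 //.
Qed.

End Proof.

Theorem corollary3p8 (F : fieldType) (B C : algType F) (M : lmodType F)
    (lb : B -> M -> M) (rc : M -> C -> M)
    (Hbim : bimodule lb rc)
    (HfB : lfaithful 0 0 lb) (HfC : rfaithful 0 0 rc)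
    (Hchar : (2%:R : F) != 0) :
  forall f : tri B C M -> tri B C M,
    JCent lb rc f <-> Cent lb rc f.
Proof.
move=> f; split; first by apply: jcent_cent.
by apply: cent_jcent.
Qed.
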